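(* Let $p\in\mathbb R_3[u_1,u_2]$ be a non-zero polynomial of the form $p=\lambda_1 u_1^3 + \lambda_2(u_1^2u_2+u_2^3)+\lambda_3 u_1u_2^2$ with $\lambda_1,\lambda_2,\lambda_3\in\mathbb R$. Then the affine line \[ \left\{\tfrac13u_1^3-u_1u_2^2+sp\mid s\in\mathbb R\right\} \] contains at least one polynomial with a root of multiplicity greater than one, equivalently with vanishing discriminant.
   Context: $\mathbb R_3[u_1,u_2]$ is the space of real homogeneous cubic polynomials in $u_1,u_2$; roots are understood projectively (linear factors over $\mathbb C$), and the discriminant of $q=q_1u_1^3+q_2u_1^2u_2+q_3u_1u_2^2+q_4u_2^3$ is $\Delta(q)=q_2^2q_3^2-4q_1q_3^3-4q_2^3q_4+18q_1q_2q_3q_4-27q_1^2q_4^2$. *)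

(* Defs.v *)
From HB Require Import structures.
From mathcomp Require Import all_boot all_order all_algebra.
From mathcomp Require Import reals.
Set Implicit Arguments. Unset Strict Implicit. Unset Printing Implicit Defensive.
Import Order.TTheory GRing.Theory Num.Theory.
Local Open Scope ring_scope.

(* q = c1 u1^3 + c2 u1^2 u2 + c3 u1 u2^2 + c4 u2^3 *)
Record cubic (R : Type) := Cubic { c1 : R; c2 : R; c3 : R; c4 : R }.

Definition cubic0 {R : ringType} : cubic R := Cubic 0 0 0 0.

Definition cubic_add {R : ringType} (p q : cubic R) : cubic R :=
  Cubic (c1 p + c1 q) (c2 p + c2 q) (c3 p + c3 q) (c4 p + c4 q).

Definition cubic_scale {R : ringType} (s : R) (p : cubic R) : cubic R :=
  Cubic (s * c1 p) (s * c2 p) (s * c3 p) (s * c4 p).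

Definition disc {R : ringType} (q : cubic R) : R :=
  let: Cubic q1 q2 q3 q4 := q in
  q2^+2 * q3^+2 - 4 * q1 * q3^+3 - 4 * q2^+3 * q4
  + 18 * q1 * q2 * q3 * q4 - 27 * q1^+2 * q4^+2.

Definition pform {R : ringType} (l1 l2 l3 : R) : cubic R := Cubic l1 l2 l3 l2.

Definition q0 {R : fieldType} : cubic R := Cubic (3%:R^-1) 0 (-1) 0.

(* Main.v *)
Require Import Defs.
From HB Require Import structures.
From mathcomp Require Import all_boot all_order all_algebra.
From mathcomp Require Import reals.
From mathcomp Require Import ring lra.
Import Order.TTheory GRing.Theory Num.Theory.
Local Open Scope ring_scope.

Lemma disc_special (R : comRingType) (x y : R) :
  disc (Cubic x y x y) = - 4 * (x ^+ 2 + y ^+ 2) ^+ 2.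
Proof. rewrite /disc; ring. Qed.

Lemma ivt_helper (R : rcfType) (P : {poly R}) (x y : R) :
  P.[x] <= 0 -> 0 <= P.[y] -> exists z, root P z.
Proof.
move=> hx hy; case: (lerP x y) => hxy.
  have [z _ hz] := poly_ivt hxy (introT andP (conj hx hy)).
  by exists z.
have hyx : y <= x by apply: ltW.
have h1 : (- P).[y] <= 0 by rewrite hornerN oppr_le0.
have h2 : 0 <= (- P).[x] by rewrite hornerN oppr_ge0.
have [z _ hz] := poly_ivt hyx (introT andP (conj h1 h2)).
by exists z; move: hz; rewrite /root hornerN oppr_eq0.
Qed.

Theorem lemma4p10 (R : realType) (l1 l2 l3 : R) :
  pform l1 l2 l3 <> cubic0 ->
  exists s : R, disc (cubic_add q0 (cubic_scale s (pform l1 l2 l3))) = 0.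
Proof.
move=> hp.
pose P : {poly R} := disc (Cubic ((3%:R^-1)%:P + 'X * l1%:P) ('X * l2%:P)
                 (-1 + 'X * l3%:P) ('X * l2%:P)).
have HP : forall s, P.[s] = disc (cubic_add q0 (cubic_scale s (pform l1 l2 l3))).
  move=> s; rewrite /P /disc /= !hornerE /=.
  ring.
have P0 : 0 < P.[0].
  rewrite HP; set D := disc _.
  have -> : D = 4 * 3%:R^-1 by rewrite /D /disc /=; ring.
  by rewrite mulr_gt0 // invr_gt0 ltr0n.
suff [x hx] : exists x, P.[x] <= 0.
  have [z hz] := @ivt_helper _ P x 0 hx (ltW P0).
  by exists z; rewrite -HP; apply/eqP.
case: (eqVneq l1 l3) => [e|ne].
  subst l3.
  have hn : 0 < l1 ^+ 2 + l2 ^+ 2.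
    case: (eqVneq l1 0) => [e1|n1].
      case: (eqVneq l2 0) => [e2|n2].
        by exfalso; apply: hp; rewrite e1 e2.
      by rewrite e1 expr0n /= add0r lt_def sqrf_eq0 n2 sqr_ge0.
    have : 0 < l1 ^+ 2 by rewrite lt_neqAle eq_sym sqrf_eq0 n1 sqr_ge0.
    nra.
  set n := l1 ^+ 2 + l2 ^+ 2 in hn.
  pose s := 1 + n^-1.
  have hns : n * s = n + 1 by rewrite /s mulrDr mulr1 mulfV // gt_eqF.
  have hs : 1 <= s by rewrite /s lerDl invr_ge0 ltW.
  have h2 : 1 <= n * s ^+ 2 by rewrite expr2 mulrA hns; nra.
  have hsum : P.[s] + P.[- s] = 2 * (4 * 3%:R^-1 - 8 * (n * s ^+ 2) - 4 * (n * s ^+ 2) ^+ 2).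
    rewrite !HP /disc /= /n.
    by field.
  have hneg : P.[s] + P.[- s] < 0.
    rewrite hsum.
    have : 3%:R^-1 <= (1 : R).
      by rewrite invr_le1 // ?ler1n // unitfE pnatr_eq0.
    nra.
  case: (lerP (P.[s]) 0) => h; first by exists s.
  by exists (- s); lra.
pose s := - 4 / (3 * (l1 - l3)).
have h3 : (3 : R) != 0 by rewrite pnatr_eq0.
have hd : l1 - l3 != 0 by rewrite subr_eq0.
have e : -1 + s * l3 = 3%:R^-1 + s * l1.
  by rewrite /s; field.
exists s; rewrite HP.
have -> : cubic_add q0 (cubic_scale s (pform l1 l2 l3)) =
  Cubic (3%:R^-1 + s * l1) (0 + s * l2) (3%:R^-1 + s * l1) (0 + s * l2).
  by rewrite /cubic_add /= e.
rewrite disc_special mulNr oppr_le0 mulr_ge0 // ?sqr_ge0 //.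
Qed.
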